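(* Let $n\ge0$ and $k\ge1$ be integers and let $T$ be a bounded linear operator on the Hardy space $H^2(\mathbb{D})$ such that for some scalars $a_{ij}$ ($0\le i\le n+k$, $0\le j\le n$), $Tz^j=\sum_{i=0}^{n+k}a_{ij}z^i$ for $0\le j\le n$ and $Tz^j=z^{j+k}$ for $j\ge n+1$. Suppose the matrix $A_1=(a_{ij})_{0\le i,j\le n}$ is a contraction on $\mathbb{C}^{n+1}$. Then $T$ is analytic if and only if $T$ has no non-zero eigenvalue.
   Context: An operator $T$ on a Hilbert space $\mathcal{H}$ is analytic if $\bigcap_{m\ge1}T^m\mathcal{H}=\{0\}$. $H^2(\mathbb{D})$ is the Hardy space on the unit disc, with orthonormal basis $\{z^m\}_{m\ge0}$. *)

(* Defs.v *)
(* H^2(D) is modelled through its orthonormal basis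
   {z^m}_{m>=0}: an element f of H^2 is identified with its Taylor coefficient
   sequence (f m)_m, i.e. H^2(D) ~= l^2(N) with complex entries. *)
From Stdlib Require Import Reals.
From Coquelicot Require Import Coquelicot.
Open Scope R_scope.

Definition inH2 (f : nat -> C) : Prop := ex_series (fun m => (Cmod (f m)) ^ 2).

Definition normH2sq (f : nat -> C) : R := Series (fun m => (Cmod (f m)) ^ 2).

Definition zpow (j : nat) : nat -> C := fun m => if Nat.eqb m j then 1%C else 0%C.

Definition fadd (f g : nat -> C) : nat -> C := fun m => (f m + g m)%C.
Definition fscal (c : C) (f : nat -> C) : nat -> C := fun m => (c * f m)%C.

Definition bounded_linear_op (T : (nat -> C) -> (nat -> C)) : Prop :=
  (forall f, inH2 f -> inH2 (T f)) /\
  (forall f g, inH2 f -> inH2 g -> T (fadd f g) = fadd (T f) (T g)) /\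
  (forall c f, inH2 f -> T (fscal c f) = fscal c (T f)) /\
  (exists M : R, forall f, inH2 f -> normH2sq (T f) <= M ^ 2 * normH2sq f).

Definition Tpow (T : (nat -> C) -> (nat -> C)) (m : nat) : (nat -> C) -> (nat -> C) :=
  Nat.iter m T.

Definition analytic_op (T : (nat -> C) -> (nat -> C)) : Prop :=
  forall f, inH2 f ->
    (forall m, (1 <= m)%nat -> exists g, inH2 g /\ f = Tpow T m g) ->
    f = (fun _ => 0%C).

Definition eigenvalue (T : (nat -> C) -> (nat -> C)) (lam : C) : Prop :=
  exists f, inH2 f /\ f <> (fun _ => 0%C) /\ T f = fscal lam f.

Definition contraction_mat (n : nat) (a : nat -> nat -> C) : Prop :=
  forall v : nat -> C,
    sum_f_R0 (fun i => (Cmod (sum_n (fun j => (a i j * v j)%C) n)) ^ 2) n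
    <= sum_f_R0 (fun j => (Cmod (v j)) ^ 2) n.

(* Main.v *)
Require Import Defs.
From Stdlib Require Import Reals.
From Coquelicot Require Import Coquelicot.
Open Scope R_scope.
From Stdlib Require Import Lia Lra FunctionalExtensionality.
Fixpoint csum (f : nat -> C) (N : nat) : C :=
  match N with O => RtoC 0 | S N' => Cplus (csum f N') (f N') end.
Definition mv (a : nat -> nat -> C) (n : nat) (v : nat -> C) : nat -> C :=
  fun i => csum (fun j => Cmult (a i j) (v j)) (S n).
Definition eqlow (n : nat) (u w : nat -> C) : Prop := forall i, le i n -> u i = w i.

From mathcomp Require all_boot all_algebra.
From mathcomp Require Rstruct complex.

Module LA.
Import all_boot all_algebra.
Import GRing.Theory Num.Theory Rstruct complex.
Local Open Scope ring_scope.

Local Notation F := (complex.complex R).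
Definition phi (z : C) : F := Complex z.1 z.2.
Definition psi (w : F) : C := (Re w, Im w).

Lemma phi_add x y : phi (Cplus x y) = phi x + phi y.
Proof. by case: x => a b; case: y => c d. Qed.
Lemma phi_mul x y : phi (Cmult x y) = phi x * phi y.
Proof. by case: x => a b; case: y => c d. Qed.
Lemma phi0 : phi (RtoC 0) = 0.
Proof. by []. Qed.
Lemma phi_psi w : phi (psi w) = w.
Proof. by case: w. Qed.
Lemma phi_inj x y : phi x = phi y -> x = y.
Proof. by case: x => a b; case: y => c d [-> ->]. Qed.

Lemma phi_csum f N : phi (csum f N) = \sum_(j < N) phi (f j).
Proof.
elim: N => [|N IH]; first by rewrite big_ord0.
by rewrite big_ord_recr /= phi_add IH.
Qed.

Section Fit.
Variable (K : fieldType) (n : nat).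
Local Notation p := n.+1.
Variable B : 'M[K]_p.

Lemma rk_mono k : (\rank (B ^+ k.+1) <= \rank (B ^+ k))%N.
Proof. by rewrite exprSr -mulmxE mxrankM_maxl. Qed.

Lemma sub_pow k : (B ^+ k.+1 <= B ^+ k)%MS.
Proof. by rewrite exprS -mulmxE submxMl. Qed.

Lemma stab k : \rank (B ^+ k.+1) = \rank (B ^+ k) ->
  \rank (B ^+ k.+2) = \rank (B ^+ k.+1).
Proof.
move=> e.
have h : (B ^+ k <= B ^+ k.+1)%MS.
  by have [_ <-] := mxrank_leqif_sup (sub_pow k); rewrite e.
have h2 : (B ^+ k *m B <= B ^+ k.+1 *m B)%MS by apply: submxMr.
rewrite !mulmxE -!exprSr in h2.
by apply/eqP; rewrite eqn_leq rk_mono mxrankS.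
Qed.

Lemma exists_stab : exists2 k, (k <= p)%N & \rank (B ^+ k.+1) = \rank (B ^+ k).
Proof.
have H : forall k, (k <= p.+1)%N -> (exists2 k', (k' < k)%N & \rank (B ^+ k'.+1) = \rank (B ^+ k'))
   \/ (\rank (B ^+ k) + k <= p)%N.
  elim=> [|k IH] hk.
    by right; rewrite expr0 addn0 rank_leq_col.
  have [[k' hk' e]|hr] := IH (ltnW hk).
    by left; exists k' => //; apply: ltn_trans hk' _.
  case: (eqVneq (\rank (B ^+ k.+1)) (\rank (B ^+ k))) => e.
    by left; exists k.
  right; have lt : (\rank (B ^+ k.+1) < \rank (B ^+ k))%N by rewrite ltn_neqAle e rk_mono.
  by rewrite addnS; apply: leq_trans hr; rewrite ltn_add2r.
have [[k' hk' e]|hr] := H p.+1 (leqnn _).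
  by exists k'.
by move: hr; rewrite addnS ltnNge leq_addl.
Qed.

Lemma stab_all k m : \rank (B ^+ k.+1) = \rank (B ^+ k) ->
  \rank (B ^+ (k + m)) = \rank (B ^+ k).
Proof.
move=> e; elim: m => [|m IH]; first by rewrite addn0.
have e' : forall m, \rank (B ^+ (k + m).+1) = \rank (B ^+ (k + m)).
  elim=> [|m' IH']; first by rewrite addn0.
  by rewrite addnS; apply: stab.
by rewrite addnS e' IH.
Qed.

Lemma rank_pow_p j : \rank (B ^+ p *m B ^+ j) = \rank (B ^+ p).
Proof.
have [k hk e] := exists_stab.
rewrite mulmxE -exprD.
have e1 := @stab_all k (p - k + j) e; have e2 := @stab_all k (p - k) e.
rewrite addnA subnKC // in e1; rewrite subnKC // in e2.
by rewrite e1 e2.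
Qed.

Lemma fit (v y : 'rV[K]_p) j : v = y *m B ^+ p -> v *m B ^+ j = 0 -> v = 0.
Proof.
move=> ev hv.
have h := mxrank_mul_ker (B ^+ p) (B ^+ j).
rewrite rank_pow_p -{2}[\rank (B ^+ p)]addn0 in h.
move/eqP: h; rewrite eqn_add2l => /eqP/eqP; rewrite mxrank_eq0 => /eqP h0.
apply/eqP; rewrite -submx0 -h0 sub_capmx; apply/andP; split.
  by rewrite ev submxMl.
by apply/sub_kermxP.
Qed.
End Fit.

Section Eig.
Variable (K : closedFieldType) (n : nat).
Local Notation p := n.+1.
Variable B : 'M[K]_p.

Lemma eig_rs (rs : seq K) (x0 : 'rV[K]_p) : x0 != 0 ->
  x0 *m horner_mx B (\prod_(z <- rs) ('X - z%:P)) = 0 ->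
  exists q : {poly K}, x0 *m horner_mx B q != 0 /\
     exists lam, (x0 *m horner_mx B q) *m B = lam *: (x0 *m horner_mx B q).
Proof.
move=> nz; elim: rs => [|r rs IH].
  by rewrite big_nil rmorph1 mulmx1 => e; move: nz; rewrite e eqxx.
rewrite big_cons mulrC rmorphM /= -mulmxE mulmxA.
set y := x0 *m _.
case: (eqVneq y 0) => [y0 _|ynz e]; first by apply: IH.
exists (\prod_(z <- rs) ('X - z%:P)); split => //.
exists r; apply/eqP; rewrite -subr_eq0 -mul_mx_scalar -mulmxBr.
by rewrite rmorphB /= horner_mx_X horner_mx_C in e; rewrite e.
Qed.

Lemma eig (x0 : 'rV[K]_p) : x0 != 0 ->
  exists q : {poly K}, x0 *m horner_mx B q != 0 /\
     exists lam, (x0 *m horner_mx B q) *m B = lam *: (x0 *m horner_mx B q).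
Proof.
move=> nz; have [rs ers] := closed_field_poly_normal (char_poly B).
apply: (@eig_rs rs) => //.
have hm : lead_coef (char_poly B) = 1 by apply/eqP; apply: char_poly_monic.
by rewrite hm scale1r in ers; rewrite -ers Cayley_Hamilton mulmx0.
Qed.

Lemma horner_mx_sum (q : {poly K}) :
  horner_mx B q = \sum_(i < size q) q`_i *: B ^+ i.
Proof.
rewrite /horner_mx /horner_morph horner_coef size_map_poly.
by apply: eq_bigr => i _; rewrite coef_map /= -mulmxE mul_scalar_mx.
Qed.
End Eig.

Definition rv n (v : nat -> C) : 'rV[F]_(n.+1) := \row_(j < n.+1) phi (v j).
Definition Bm (a : nat -> nat -> C) n : 'M[F]_(n.+1) := \matrix_(i < n.+1, j < n.+1) phi (a j i).

Lemma rv_mv a n v : rv n (mv a n v) = rv n v *m Bm a n.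
Proof.
apply/rowP => i; rewrite !mxE /mv phi_csum; apply: eq_bigr => j _.
by rewrite !mxE phi_mul mulrC.
Qed.

Lemma rv_iter a n l v : rv n (Nat.iter l (mv a n) v) = rv n v *m Bm a n ^+ l.
Proof.
elim: l => [|l IH]; first by rewrite expr0 mulmx1.
by rewrite /= rv_mv IH exprSr -mulmxE mulmxA.
Qed.

Lemma rv_eq n u w : rv n u = rv n w <-> eqlow n u w.
Proof.
split.
  move=> e i /leP hi; apply: phi_inj.
  by move/rowP: e => /(_ (Ordinal (hi : (i < n.+1)%N))); rewrite !mxE.
by move=> e; apply/rowP => i; rewrite !mxE e //; apply/leP; rewrite -ltnS.
Qed.

Lemma rv0 n : rv n (fun _ => RtoC 0) = 0.
Proof. by apply/rowP => i; rewrite !mxE. Qed.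

Lemma rv_csum n (g : nat -> nat -> C) d :
  rv n (fun i => csum (fun l => g l i) d) = \sum_(l < d) rv n (g l).
Proof.
apply/rowP => i; rewrite !mxE phi_csum summxE; apply: eq_bigr => l _.
by rewrite !mxE.
Qed.

Lemma rv_scal n c w : rv n (fun i => Cmult c (w i)) = phi c *: rv n w.
Proof. by apply/rowP => i; rewrite !mxE phi_mul. Qed.

Lemma rv_sub n u w : rv n u - rv n w = \row_(j < n.+1) (phi (u j) - phi (w j)).
Proof. by apply/rowP => i; rewrite !mxE. Qed.

Lemma L1_C a n u w j :
  eqlow n (Nat.iter j (mv a n) (Nat.iter (S n) (mv a n) u))
          (Nat.iter j (mv a n) (Nat.iter (S n) (mv a n) w)) ->
  eqlow n (Nat.iter (S n) (mv a n) u) (Nat.iter (S n) (mv a n) w).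
Proof.
move/rv_eq; rewrite !rv_iter => e; apply/rv_eq; rewrite !rv_iter.
apply/eqP; rewrite -subr_eq0; apply/eqP.
apply: (@fit _ n (Bm a n) _ (rv n u - rv n w) j); first by rewrite mulmxBl.
by rewrite mulmxBl e subrr.
Qed.

Lemma L2_C a n x0 : ~ eqlow n x0 (fun _ => RtoC 0) ->
  exists (c : nat -> C) (d : nat) (lam : C),
    ~ eqlow n (fun i => csum (fun l => Cmult (c l) (Nat.iter l (mv a n) x0 i)) d) (fun _ => RtoC 0) /\
    eqlow n (mv a n (fun i => csum (fun l => Cmult (c l) (Nat.iter l (mv a n) x0 i)) d))
            (fun i => Cmult lam (csum (fun l => Cmult (c l) (Nat.iter l (mv a n) x0 i)) d)).
Proof.
move=> nz.
have nz' : rv n x0 != 0.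
  by apply/eqP => e; apply: nz; apply/rv_eq; rewrite e rv0.
have [q [hq [lam hl]]] := @eig _ n (Bm a n) _ nz'.
exists (fun l => psi q`_l), (size q), (psi lam).
have eX : rv n (fun i => csum (fun l => Cmult (psi q`_l) (Nat.iter l (mv a n) x0 i)) (size q))
   = rv n x0 *m horner_mx (Bm a n) q.
  rewrite (rv_csum n (fun l i => Cmult (psi q`_l) (Nat.iter l (mv a n) x0 i))).
  rewrite horner_mx_sum mulmx_sumr; apply: eq_bigr => l _.
  by rewrite rv_scal phi_psi rv_iter scalemxAr.
split.
  by move/rv_eq; rewrite rv0 eX => e; move: hq; rewrite e eqxx.
apply/rv_eq; rewrite rv_mv rv_scal phi_psi eX; exact: hl.
Qed.
End LA.

Lemma Cmod2_nonneg (z : C) : 0 <= Cmod z ^ 2.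
Proof. apply pow2_ge_0. Qed.

Lemma ex_series_fin (G : nat -> R) N : (forall m, (N <= m)%nat -> G m = 0) -> ex_series G.
Proof.
  intros H. apply (ex_series_incr_n G N).
  apply ex_series_ext with (a := fun _ : nat => 0).
  { intros m. rewrite H; [reflexivity| lia]. }
  exists 0. apply is_series_Reals. intros eps Heps. exists O. intros m _.
  rewrite sum_cte. unfold R_dist. rewrite Rmult_0_l, Rminus_0_r, Rabs_R0. exact Heps.
Qed.

Lemma inH2_zero : inH2 (fun _ => RtoC 0).
Proof. unfold inH2. apply (ex_series_fin _ O). intros m _. rewrite Cmod_0. ring. Qed.

Lemma inH2_zpow j : inH2 (zpow j).
Proof.
  unfold inH2, zpow. apply (ex_series_fin _ (S j)). intros m Hm.
  destruct (Nat.eqb_spec m j); [lia|]. rewrite Cmod_0. ring.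
Qed.

Lemma inH2_le (f g : nat -> C) : (forall m, Cmod (f m) <= Cmod (g m)) -> inH2 g -> inH2 f.
Proof.
  intros H Hg. unfold inH2 in *. apply (ex_series_le (K := R_AbsRing) (V := R_CompleteNormedModule)) with (b := fun m => Cmod (g m) ^ 2); auto.
  intros m. unfold norm; simpl. rewrite Rabs_pos_eq by apply Cmod2_nonneg.
  specialize (H m). pose proof (Cmod_ge_0 (f m)). nra.
Qed.

Lemma inH2_fadd f g : inH2 f -> inH2 g -> inH2 (fadd f g).
Proof.
  intros Hf Hg. unfold inH2 in *.
  apply (ex_series_le (K := R_AbsRing) (V := R_CompleteNormedModule)) with (b := fun m => 2 * (Cmod (f m) ^ 2) + 2 * (Cmod (g m) ^ 2)).
  - intros m. unfold norm; simpl. rewrite Rabs_pos_eq by apply Cmod2_nonneg.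
    unfold fadd. pose proof (Cmod_triangle (f m) (g m)).
    pose proof (Cmod_ge_0 (f m)). pose proof (Cmod_ge_0 (g m)).
    pose proof (Cmod_ge_0 (f m + g m)%C).
    set (x := Cmod (f m)) in *. set (y := Cmod (g m)) in *. set (z := Cmod (f m + g m)%C) in *.
    assert (z ^ 2 <= (x + y) ^ 2) by (simpl; apply Rmult_le_compat; lra).
    pose proof (pow2_ge_0 (x - y)). simpl in *. nra.
  - apply (ex_series_plus (V := R_NormedModule)); apply (ex_series_scal (V := R_NormedModule)); assumption.
Qed.

Lemma inH2_fscal c f : inH2 f -> inH2 (fscal c f).
Proof.
  intros Hf. unfold inH2 in *.
  apply ex_series_ext with (a := fun m => scal (Cmod c ^ 2) (Cmod (f m) ^ 2)).
  - intros m. unfold fscal, scal; simpl. unfold mult; simpl. rewrite Cmod_mult. ring.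
  - apply (ex_series_scal (V := R_NormedModule)). assumption.
Qed.

Lemma Series_term (b : nat -> R) i : (forall m, 0 <= b m) -> ex_series b -> b i <= Series b.
Proof.
  intros Hb He. apply Rle_trans with (sum_f_R0 b i).
  - destruct i as [|i]; simpl; [lra|]. pose proof (cond_pos_sum b i Hb). lra.
  - apply sum_incr; [|exact Hb]. apply is_series_Reals. apply Series_correct. exact He.
Qed.

Lemma coef_bound h i : inH2 h -> Cmod (h i) ^ 2 <= normH2sq h.
Proof. intros Hh. apply (Series_term (fun m => Cmod (h m) ^ 2)); [intros; apply Cmod2_nonneg| exact Hh]. Qed.

Definition trunc (g : nat -> C) N : nat -> C := fun m => if Nat.ltb m N then g m else RtoC 0.
Definition rem (g : nat -> C) N : nat -> C := fun m => if Nat.ltb m N then RtoC 0 else g m.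

Lemma inH2_trunc g N : inH2 g -> inH2 (trunc g N).
Proof. apply inH2_le. intros m. unfold trunc. destruct (Nat.ltb m N); [lra|]. rewrite Cmod_0. apply Cmod_ge_0. Qed.
Lemma inH2_rem g N : inH2 g -> inH2 (rem g N).
Proof. apply inH2_le. intros m. unfold rem. destruct (Nat.ltb m N); [|lra]. rewrite Cmod_0. apply Cmod_ge_0. Qed.

Lemma trunc_rem g N : g = fadd (trunc g N) (rem g N).
Proof.
  apply functional_extensionality. intros m. unfold fadd, trunc, rem.
  destruct (Nat.ltb m N); ring.
Qed.

Lemma rem_small g : inH2 g -> forall eps, 0 < eps -> exists N0, forall N, (N0 <= N)%nat -> normH2sq (rem g N) < eps.
Proof.
  intros Hg eps Heps.
  pose proof (Series_correct _ Hg) as Hs. apply is_series_Reals in Hs.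
  destruct (Hs eps Heps) as [N0 HN0]. exists (S N0). intros N HN.
  destruct N as [|N]; [lia|].
  specialize (HN0 N ltac:(lia)). unfold R_dist in HN0.
  pose proof (Series_incr_n _ (S N) ltac:(lia) Hg) as E. cbn [Nat.pred Nat.add] in E.
  unfold normH2sq.
  rewrite (Series_incr_n_aux _ (S N)).
  2:{ intros m Hm. unfold rem. destruct (Nat.ltb_spec m (S N)); [|lia]. rewrite Cmod_0. ring. }
  rewrite (Series_ext _ (fun m => Cmod (g (S (N + m))) ^ 2)).
  2:{ intros m. unfold rem. destruct (Nat.ltb_spec (S N + m) (S N)); [lia|]. reflexivity. }
  apply Rabs_def2 in HN0. lra.
Qed.

Lemma csum_ext f g N : (forall j, (j < N)%nat -> f j = g j) -> csum f N = csum g N.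
Proof.
  induction N as [|N IH]; intros H; simpl; [reflexivity|].
  rewrite IH by (intros; apply H; lia). rewrite H by lia. reflexivity.
Qed.

Lemma csum_split f p m : csum f (p + m) = Cplus (csum f p) (csum (fun j => f (p + j)%nat) m).
Proof.
  induction m as [|m IH]; simpl.
  - rewrite Nat.add_0_r. ring.
  - rewrite Nat.add_succ_r. simpl. rewrite IH. ring.
Qed.

Lemma csum_zero f N : (forall j, (j < N)%nat -> f j = RtoC 0) -> csum f N = RtoC 0.
Proof.
  induction N as [|N IH]; intros H; simpl; [reflexivity|].
  rewrite IH by (intros; apply H; lia). rewrite H by lia. ring.
Qed.

Lemma mv_ext a n u w : eqlow n u w -> mv a n u = mv a n w.
Proof.
  intros H. apply functional_extensionality. intros i. unfold mv.
  apply csum_ext. intros j Hj. rewrite H by lia. reflexivity.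
Qed.

Lemma mv_zero a n : mv a n (fun _ => RtoC 0) = (fun _ => RtoC 0).
Proof.
  apply functional_extensionality. intros i. unfold mv. apply csum_zero. intros. ring.
Qed.

Lemma iter_mv_zero a n m : Nat.iter m (mv a n) (fun _ => RtoC 0) = (fun _ => RtoC 0).
Proof. induction m as [|m IH]; simpl; [reflexivity|]. rewrite IH. apply mv_zero. Qed.

Lemma inH2_trunc_any g N : inH2 (trunc g N).
Proof.
  unfold inH2, trunc. apply (ex_series_fin _ N). intros m Hm.
  destruct (Nat.ltb_spec m N); [lia|]. rewrite Cmod_0. ring.
Qed.

Section Main.
Variables (n k : nat) (T : (nat -> C) -> (nat -> C)) (a : nat -> nat -> C).
Hypothesis hk : (1 <= k)%nat.
Hypothesis hT : bounded_linear_op T.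
Hypothesis hlow : forall j, (j <= n)%nat ->
     T (zpow j) = (fun i => if Nat.leb i (n + k) then a i j else 0%C).
Hypothesis hhigh : forall j, (n + 1 <= j)%nat -> T (zpow j) = zpow (j + k).

Lemma T_H2 f : inH2 f -> inH2 (T f).
Proof. destruct hT as [H _]. apply H. Qed.
Lemma T_add f g : inH2 f -> inH2 g -> T (fadd f g) = fadd (T f) (T g).
Proof. destruct hT as [_ [H _]]. apply H. Qed.
Lemma T_scal c f : inH2 f -> T (fscal c f) = fscal c (T f).
Proof. destruct hT as [_ [_ [H _]]]. apply H. Qed.

Lemma T_zero : T (fun _ => RtoC 0) = (fun _ => RtoC 0).
Proof.
  assert (E : (fun _ : nat => RtoC 0) = fscal (RtoC 0) (fun _ => RtoC 0)).
  { apply functional_extensionality. intros. unfold fscal. ring. }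
  rewrite E, T_scal by apply inH2_zero.
  apply functional_extensionality. intros. unfold fscal. ring.
Qed.

Lemma T_trunc g N i : T (trunc g N) i = csum (fun j => Cmult (g j) (T (zpow j) i)) N.
Proof.
  induction N as [|N IH].
  - assert (E : trunc g 0 = (fun _ => RtoC 0)).
    { apply functional_extensionality. intros m. reflexivity. }
    rewrite E, T_zero. reflexivity.
  - assert (E : trunc g (S N) = fadd (trunc g N) (fscal (g N) (zpow N))).
    { apply functional_extensionality. intros m. unfold trunc, fadd, fscal, zpow.
      destruct (Nat.ltb_spec m (S N)), (Nat.ltb_spec m N), (Nat.eqb_spec m N);
        try lia; subst; ring. }
    rewrite E, T_add, T_scal.
    + unfold fadd, fscal. simpl. rewrite IH. reflexivity.
    + apply inH2_zpow.
    + apply inH2_trunc_any.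
    + apply inH2_fscal, inH2_zpow.
Qed.


Definition form (g : nat -> C) (i : nat) : C :=
  if Nat.leb i (n + k) then mv a n g i else g (i - k)%nat.

Lemma Tz_val j i : T (zpow j) i =
  if Nat.leb j n then (if Nat.leb i (n + k) then a i j else RtoC 0)
  else (if Nat.eqb i (j + k) then RtoC 1 else RtoC 0).
Proof.
  destruct (Nat.leb_spec j n).
  - rewrite hlow by lia. reflexivity.
  - rewrite hhigh by lia. reflexivity.
Qed.

Lemma high_sum g i m :
  csum (fun j => Cmult (g (S n + j)%nat) (if Nat.eqb i (S n + j + k) then RtoC 1 else RtoC 0)) m
  = if andb (Nat.leb (S n + k) i) (Nat.ltb i (S n + k + m)) then g (i - k)%nat else RtoC 0.
Proof.
  induction m as [|m IH]; cbn [csum].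
  - destruct (Nat.leb_spec (S n + k) i), (Nat.ltb_spec i (S n + k + 0)); simpl; try reflexivity; lia.
  - cbv beta. rewrite IH.
    destruct (Nat.eqb_spec i (S n + m + k)) as [e|e].
    + subst i. rewrite (proj2 (Nat.leb_le _ _)) by lia.
      rewrite (proj2 (Nat.ltb_ge _ _)) by lia. rewrite (proj2 (Nat.ltb_lt _ _)) by lia.
      cbn [andb]. replace (S n + m + k - k)%nat with (S n + m)%nat by lia. ring.
    + destruct (Nat.leb_spec (S n + k) i), (Nat.ltb_spec i (S n + k + m)), (Nat.ltb_spec i (S n + k + S m));
        cbn [andb]; try lia; ring.
Qed.

Lemma trunc_formula g N i : (S n <= N)%nat -> (i < N)%nat ->
  csum (fun j => Cmult (g j) (T (zpow j) i)) N = form g i.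
Proof.
  intros H1 H2. replace N with (S n + (N - S n))%nat by lia.
  rewrite csum_split.
  rewrite (csum_ext (fun j => Cmult (g (S n + j)%nat) (T (zpow (S n + j)%nat) i)) (fun j => Cmult (g (S n + j)%nat) (if Nat.eqb i (S n + j + k) then RtoC 1 else RtoC 0))).
  2:{ intros j Hj. rewrite Tz_val. destruct (Nat.leb_spec (S n + j) n); [lia|]. reflexivity. }
  rewrite high_sum.
  unfold form. destruct (Nat.leb_spec i (n + k)).
  - rewrite (csum_ext (fun j => Cmult (g j) (T (zpow j) i)) (fun j => Cmult (a i j) (g j))).
    2:{ intros j Hj. rewrite Tz_val. destruct (Nat.leb_spec j n); [|lia].
        destruct (Nat.leb_spec i (n + k)); [|lia]. ring. }
    destruct (Nat.leb_spec (S n + k) i); [lia|]. cbn [andb]. unfold mv. ring.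
  - rewrite csum_zero.
    2:{ intros j Hj. rewrite Tz_val. destruct (Nat.leb_spec j n); [|lia].
        destruct (Nat.leb_spec i (n + k)); [lia|]. ring. }
    destruct (Nat.leb_spec (S n + k) i); [|lia].
    destruct (Nat.ltb_spec i (S n + k + (N - S n))); [|lia]. cbn [andb]. ring.
Qed.

Lemma T_formula g : inH2 g -> forall i, T g i = form g i.
Proof.
  intros Hg i.
  destruct hT as [_ [_ [_ [M HM]]]].
  set (d := Cminus (T g i) (form g i)).
  assert (Hd : forall N, (S n + i <= N)%nat -> d = T (rem g N) i).
  { intros N HN. unfold d. rewrite (trunc_rem g N) at 1.
    rewrite T_add by (apply inH2_trunc_any || apply inH2_rem; exact Hg).
    unfold fadd. rewrite T_trunc, trunc_formula by lia. ring. }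
  assert (Hb : forall N, (S n + i <= N)%nat -> Cmod d ^ 2 <= M ^ 2 * normH2sq (rem g N)).
  { intros N HN. rewrite (Hd N HN). eapply Rle_trans.
    - apply coef_bound. apply T_H2, inH2_rem, Hg.
    - apply HM, inH2_rem, Hg. }
  assert (Hz : Cmod d ^ 2 <= 0).
  { apply Rnot_lt_le. intros Hpos.
    set (eps := Cmod d ^ 2 / (2 * (M ^ 2 + 1))).
    assert (He : 0 < eps).
    { unfold eps. apply Rdiv_lt_0_compat; [exact Hpos|]. pose proof (pow2_ge_0 M). lra. }
    destruct (rem_small g Hg eps He) as [N0 HN0].
    specialize (HN0 (N0 + S n + i)%nat ltac:(lia)).
    specialize (Hb (N0 + S n + i)%nat ltac:(lia)).
    pose proof (pow2_ge_0 M).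
    assert (Hr : 0 <= normH2sq (rem g (N0 + S n + i))).
    { eapply Rle_trans; [apply (Cmod2_nonneg (rem g (N0 + S n + i) O))| apply coef_bound, inH2_rem, Hg]. }
    assert (M ^ 2 * normH2sq (rem g (N0 + S n + i)) <= M ^ 2 * eps) by (apply Rmult_le_compat_l; lra).
    assert (M ^ 2 * eps < Cmod d ^ 2).
    { unfold eps. apply Rmult_lt_reg_r with (2 * (M ^ 2 + 1)); [lra|].
      field_simplify; [|lra]. nra. }
    lra. }
  assert (Cmod d = 0).
  { pose proof (Cmod_ge_0 d). simpl in Hz. nra. }
  apply Cmod_eq_0 in H.
  assert (E : T g i = Cplus d (form g i)) by (unfold d; ring).
  rewrite E, H. ring.
Qed.


Lemma Tpow_S m g : Tpow T (S m) g = T (Tpow T m g).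
Proof. reflexivity. Qed.

Lemma Tpow_H2 m g : inH2 g -> inH2 (Tpow T m g).
Proof. intros Hg. induction m as [|m IH]; [exact Hg|]. rewrite Tpow_S. apply T_H2, IH. Qed.

Lemma Tpow_add m f g : inH2 f -> inH2 g -> Tpow T m (fadd f g) = fadd (Tpow T m f) (Tpow T m g).
Proof.
  intros Hf Hg. induction m as [|m IH]; [reflexivity|].
  rewrite !Tpow_S, IH. apply T_add; apply Tpow_H2; assumption.
Qed.

Lemma Tpow_scal m c f : inH2 f -> Tpow T m (fscal c f) = fscal c (Tpow T m f).
Proof.
  intros Hf. induction m as [|m IH]; [reflexivity|].
  rewrite !Tpow_S, IH. apply T_scal; apply Tpow_H2; assumption.
Qed.

Lemma Tpow_zero m : Tpow T m (fun _ => RtoC 0) = (fun _ => RtoC 0).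
Proof. induction m as [|m IH]; [reflexivity|]. rewrite Tpow_S, IH. apply T_zero. Qed.

Lemma T_low f i : inH2 f -> (i <= n)%nat -> T f i = mv a n f i.
Proof.
  intros Hf Hi. rewrite T_formula by exact Hf. unfold form.
  destruct (Nat.leb_spec i (n + k)); [reflexivity|lia].
Qed.

Lemma Tpow_low m h : inH2 h -> eqlow n (Tpow T m h) (Nat.iter m (mv a n) h).
Proof.
  intros Hh. induction m as [|m IH]; intros i Hi; [reflexivity|].
  rewrite Tpow_S, T_low by (try apply Tpow_H2; assumption).
  simpl Nat.iter. rewrite (mv_ext a n _ _ IH). reflexivity.
Qed.

Lemma Tpow_block l : forall m h i0, inH2 h -> (S n <= i0 <= n + k)%nat -> (l < m)%nat ->
  Tpow T m h (i0 + l * k)%nat = mv a n (Nat.iter (m - 1 - l) (mv a n) h) i0.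
Proof.
  induction l as [|l IH]; intros m h i0 Hh Hi Hl.
  - destruct m as [|m]; [lia|]. rewrite Nat.mul_0_l, Nat.add_0_r, Tpow_S.
    rewrite T_formula by (apply Tpow_H2; exact Hh). unfold form.
    destruct (Nat.leb_spec i0 (n + k)); [|lia].
    rewrite (mv_ext a n _ _ (Tpow_low m h Hh)). f_equal. f_equal. lia.
  - destruct m as [|m]; [lia|]. rewrite Tpow_S.
    rewrite T_formula by (apply Tpow_H2; exact Hh). unfold form.
    destruct (Nat.leb_spec (i0 + S l * k) (n + k)); [nia|].
    replace (i0 + S l * k - k)%nat with (i0 + l * k)%nat by nia.
    rewrite IH by (auto; lia). f_equal. f_equal. lia.
Qed.

Definition inM (f : nat -> C) : Prop := inH2 f /\ forall m, exists g, inH2 g /\ f = Tpow T m g.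

Lemma determ f1 f2 : inM f1 -> inM f2 -> eqlow n f1 f2 -> f1 = f2.
Proof.
  intros [H1 M1] [H2 M2] E. apply functional_extensionality. intros i.
  destruct (Nat.le_gt_cases i n) as [Hi|Hi]; [apply E; exact Hi|].
  set (r := ((i - S n) mod k)%nat). set (l := ((i - S n) / k)%nat).
  assert (Hk0 : k <> 0%nat) by lia.
  pose proof (Nat.div_mod (i - S n) k Hk0) as Hdm. pose proof (Nat.mod_upper_bound (i - S n) k Hk0) as Hmb.
  fold r l in Hdm, Hmb.
  assert (Ei : i = (S n + r + l * k)%nat) by nia.
  set (m := (S l + S n)%nat).
  destruct (M1 m) as [g1 [Hg1 E1]]. destruct (M2 m) as [g2 [Hg2 E2]].
  assert (Hlow : eqlow n (Nat.iter (S n) (mv a n) g1) (Nat.iter (S n) (mv a n) g2)).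
  { apply (LA.L1_C a n g1 g2 (S l)). rewrite <- !Nat.iter_add. fold m.
    intros j Hj. rewrite <- (Tpow_low m g1 Hg1 j Hj), <- (Tpow_low m g2 Hg2 j Hj).
    rewrite <- E1, <- E2. apply E; exact Hj. }
  rewrite Ei, E1, E2, !Tpow_block by (auto; lia).
  replace (m - 1 - l)%nat with (S n) by lia.
  rewrite (mv_ext a n _ _ Hlow). reflexivity.
Qed.

Lemma inM_zero : inM (fun _ => RtoC 0).
Proof.
  split; [apply inH2_zero|]. intros m. exists (fun _ => RtoC 0). split; [apply inH2_zero|].
  symmetry. apply Tpow_zero.
Qed.

Lemma inM_T f : inM f -> inM (T f).
Proof.
  intros [Hf Mf]. split; [apply T_H2, Hf|]. intros m.
  destruct m as [|m].
  - exists (T f). split; [apply T_H2, Hf| reflexivity].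
  - destruct (Mf m) as [g [Hg Eg]]. exists g. split; [exact Hg|]. rewrite Tpow_S, Eg. reflexivity.
Qed.

Lemma inM_Tpow m f : inM f -> inM (Tpow T m f).
Proof. intros Hf. induction m as [|m IH]; [exact Hf|]. rewrite Tpow_S. apply inM_T, IH. Qed.

Lemma inM_fadd f g : inM f -> inM g -> inM (fadd f g).
Proof.
  intros [Hf Mf] [Hg Mg]. split; [apply inH2_fadd; assumption|]. intros m.
  destruct (Mf m) as [f' [Hf' Ef]]. destruct (Mg m) as [g' [Hg' Eg]].
  exists (fadd f' g'). split; [apply inH2_fadd; assumption|].
  rewrite Tpow_add by assumption. rewrite Ef, Eg. reflexivity.
Qed.

Lemma inM_fscal c f : inM f -> inM (fscal c f).
Proof.
  intros [Hf Mf]. split; [apply inH2_fscal; assumption|]. intros m.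
  destruct (Mf m) as [f' [Hf' Ef]].
  exists (fscal c f'). split; [apply inH2_fscal; assumption|].
  rewrite Tpow_scal by assumption. rewrite Ef. reflexivity.
Qed.

Lemma inM_comb (c : nat -> C) d f0 : inM f0 ->
  inM (fun i => csum (fun l => Cmult (c l) (Tpow T l f0 i)) d).
Proof.
  intros Hf0. induction d as [|d IH]; [apply inM_zero|].
  assert (E : (fun i => csum (fun l => Cmult (c l) (Tpow T l f0 i)) (S d)) =
     fadd (fun i => csum (fun l => Cmult (c l) (Tpow T l f0 i)) d) (fscal (c d) (Tpow T d f0))).
  { apply functional_extensionality. intros i. reflexivity. }
  rewrite E. apply inM_fadd; [exact IH|]. apply inM_fscal, inM_Tpow, Hf0.
Qed.

Lemma main_iff : analytic_op T <-> ~ (exists lam : C, lam <> 0%C /\ eigenvalue T lam).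
Proof.
  split.
  - intros Han [lam [Hl [f [Hf [Hnz HTf]]]]]. apply Hnz. apply Han; [exact Hf|]. intros m _.
    assert (Teig : forall m, Tpow T m f = fscal (Nat.iter m (Cmult lam) (RtoC 1)) f).
    { induction m0 as [|m0 IH].
      - apply functional_extensionality. intros i. unfold fscal. simpl. ring.
      - rewrite Tpow_S, IH, T_scal, HTf by exact Hf.
        apply functional_extensionality. intros i. unfold fscal. simpl. ring. }
    assert (Hcp : forall m, Nat.iter m (Cmult lam) (RtoC 1) <> RtoC 0).
    { induction m0 as [|m0 IH].
      - simpl. intros H. apply (f_equal fst) in H. simpl in H. lra.
      - simpl. apply Cmult_neq_0; assumption. }
    exists (fscal (/ Nat.iter m (Cmult lam) (RtoC 1)) f). split; [apply inH2_fscal, Hf|].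
    rewrite Tpow_scal, Teig by exact Hf.
    apply functional_extensionality. intros i. unfold fscal.
    rewrite Cmult_assoc, Cinv_l by apply Hcp. ring.
  - intros Hno f Hf Hr.
    destruct (Classical_Prop.classic (f = (fun _ => RtoC 0))) as [E|Hnz]; [exact E|].
    exfalso. apply Hno.
    assert (HMf : inM f).
    { split; [exact Hf|]. intros m. destruct m as [|m].
      - exists f. split; [exact Hf|reflexivity].
      - apply Hr. lia. }
    assert (Hx : ~ eqlow n f (fun _ => RtoC 0)).
    { intros E. apply Hnz. apply determ; [exact HMf| apply inM_zero| exact E]. }
    destruct (LA.L2_C a n f Hx) as [c [d [lam [HX1 HX2]]]].
    set (X := fun i => csum (fun l => Cmult (c l) (Nat.iter l (mv a n) f i)) d) in *.
    set (F := fun i => csum (fun l => Cmult (c l) (Tpow T l f i)) d).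
    assert (HF : inM F) by (apply inM_comb, HMf).
    assert (HFX : eqlow n F X).
    { intros i Hi. unfold F, X. apply csum_ext. intros l _. rewrite (Tpow_low l f Hf i Hi). reflexivity. }
    assert (Heig : T F = fscal lam F).
    { apply determ; [apply inM_T, HF| apply inM_fscal, HF|].
      intros i Hi. rewrite T_low by (try apply (proj1 HF); exact Hi).
      rewrite (mv_ext a n _ _ HFX), HX2 by exact Hi. unfold fscal. rewrite HFX by exact Hi. reflexivity. }
    assert (Hl : lam <> RtoC 0).
    { intros Hl0. apply HX1.
      destruct (proj2 HF (S n)) as [g [Hg EF]].
      assert (HgX : eqlow n (Nat.iter (S n) (mv a n) g) X).
      { intros i Hi. rewrite <- HFX by exact Hi. rewrite EF. symmetry. apply Tpow_low; assumption. }
      assert (L : eqlow n (Nat.iter 1 (mv a n) (Nat.iter (S n) (mv a n) g))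
                          (Nat.iter 1 (mv a n) (Nat.iter (S n) (mv a n) (fun _ => RtoC 0)))).
      { change (eqlow n (mv a n (Nat.iter (S n) (mv a n) g)) (mv a n (Nat.iter (S n) (mv a n) (fun _ => RtoC 0)))).
        rewrite iter_mv_zero, mv_zero.
        intros i Hi. rewrite (mv_ext a n _ _ HgX), HX2 by exact Hi. rewrite Hl0. ring. }
      apply LA.L1_C in L. rewrite iter_mv_zero in L.
      intros i Hi. rewrite <- HgX by exact Hi. apply L; exact Hi. }
    exists lam. split; [exact Hl|]. exists F. split; [apply (proj1 HF)|]. split; [|exact Heig].
    intros E. apply HX1. intros i Hi. rewrite <- HFX by exact Hi. rewrite E. reflexivity.
Qed.

End Main.

Theorem theorem4p3 (n k : nat) (hk : (1 <= k)%nat)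
  (T : (nat -> C) -> (nat -> C)) (a : nat -> nat -> C)
  (hT : bounded_linear_op T)
  (hlow : forall j, (j <= n)%nat ->
     T (zpow j) = (fun i => if Nat.leb i (n + k) then a i j else 0%C))
  (hhigh : forall j, (n + 1 <= j)%nat -> T (zpow j) = zpow (j + k))
  (hA1 : contraction_mat n a) :
  analytic_op T <-> ~ (exists lam : C, lam <> 0%C /\ eigenvalue T lam).
Proof.
  apply (main_iff n k T a); assumption.
Qed.
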